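(* Let $q$ be a prime number, $l\ge 2$ an integer, and $\alpha=\alpha_1/\alpha_2\in\mathbb{Q}\text{-}\mathcal{KS}(q^{l})$. Then $\alpha\in[-1,0[$ if and only if there exists a positive integer $d$ with $d\mid(q^{l}-q)$ such that $$\alpha=q-\frac{d}{\alpha_2}\quad\text{and}\quad \alpha_2\in\Bigl\{\Bigl\lceil\frac{d}{q+1}\Bigr\rceil,\dots,\Bigl\lceil\frac{d}{q}\Bigr\rceil-1\Bigr\}.$$
   Context: Every nonzero rational $\alpha$ is written $\alpha=\alpha_1/\alpha_2$ with $\alpha_1\in\mathbb{Z}$, $\alpha_2$ a positive integer and $\gcd(\alpha_1,\alpha_2)=1$. For an integer $N\ge 2$ and a nonzero rational $\alpha=\alpha_1/\alpha_2$, $N$ is called an $\alpha$-Korselt number if $N\neq\alpha$ and $\alpha_2p-\alpha_1$ divides $\alpha_2N-\alpha_1$ (in $\mathbb{Z}$) for every prime divisor $p$ of $N$. $\mathbb{Q}\text{-}\mathcal{KS}(N)$ is the set of all $\beta\in\mathbb{Q}\setminus\{0,N\}$ such that $N$ is a $\beta$-Korselt number. $[-1,0[=\{x:-1\le x<0\}$; $\lceil\cdot\rceil$ is the ceiling function; $\{a,\dots,b\}$ is the set of integers from $a$ to $b$ (empty if $a>b$). *)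

(* Defs.v *)
(* Rationals: alpha : rat, alpha_1 = numq alpha, alpha_2 = denq alpha (> 0, coprime). *)
From mathcomp Require Import all_boot all_order all_algebra.
Set Implicit Arguments. Unset Strict Implicit. Unset Printing Implicit Defensive.
Import Order.TTheory GRing.Theory Num.Theory.
Local Open Scope ring_scope.

Definition korselt (N : nat) (alpha : rat) : Prop :=
  (N%:Q != alpha) /\
  forall p : nat, prime p -> (p %| N)%N ->
    (denq alpha * p%:Z - numq alpha %| denq alpha * N%:Z - numq alpha)%Z.

Definition QKS (N : nat) (beta : rat) : Prop :=
  beta != 0 /\ beta != N%:Q /\ korselt N beta.

(* Main.v *)
Require Import Defs.
From mathcomp Require Import all_boot all_order all_algebra.
From mathcomp Require Import zify ring lra.
Import Order.TTheory GRing.Theory Num.Theory.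
Local Open Scope ring_scope.

Theorem proposition5p7 (q l : nat) (alpha : rat) :
  prime q -> (2 <= l)%N -> QKS (q ^ l) alpha ->
  ((-1 <= alpha /\ alpha < 0) <->
   exists d : nat, [/\ (0 < d)%N, (d %| q ^ l - q)%N,
     alpha = q%:Q - d%:Q / (denq alpha)%:~R,
     Num.ceil (d%:Q / (q.+1)%:Q) <= denq alpha
     & denq alpha <= Num.ceil (d%:Q / q%:Q) - 1]).
Proof.
move=> qp l2 [a0 [aN [_ K]]].
have q0 : (0 < q)%N by apply: prime_gt0.
have q0Q : 0 < q%:Q by rewrite ltr0n.
have a2p : 0 < (denq alpha)%:~R :> rat by rewrite ltr0z denq_gt0.
set A : rat := (denq alpha)%:~R in a2p *.
have hq1 : (q.+1)%:~R = q%:~R + 1 :> rat by rewrite -addn1 PoszD rmorphD.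
split.
  case=> am1 aneg.
  have a1n : numq alpha < 0 by rewrite numq_lt0.
  set D : int := denq alpha * q%:Z - numq alpha.
  have Dp : 0 < D.
    rewrite /D; have := denq_gt0 alpha; have : (0 <= q%:Z) by []; nia.
  have H := K q qp (dvdn_exp2l q (ltnW l2) : (q %| q ^ l)%N).
  have H2 : (D %| denq alpha * ((q ^ l)%:Z - q%:Z))%Z.
    have -> : denq alpha * ((q ^ l)%:Z - q%:Z) =
      (denq alpha * (q ^ l)%:Z - numq alpha) - D by rewrite /D; ring.
    exact: rpredB H (dvdzz D).
  have cop : coprimez D (denq alpha).
    rewrite coprimez_sym /coprimez /D mulrC gcdzMDl gcdzN gcdzC.
    have := coprime_num_den alpha; by rewrite /coprime.
  rewrite Gauss_dvdzr // in H2.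
  exists `|D|%N.
  have eD : (`|D|%N : int) = D by rewrite gez0_abs // ltW.
  have eDQ : (`|D|%N)%:Q = A * q%:Q - A * alpha.
    have -> : (`|D|%N)%:Q = D%:~R by rewrite -eD.
    rewrite /D rmorphB rmorphM /= -[in RHS](divq_num_den alpha) /A.
    field; rewrite -/A; lra.
  split.
  - lia.
  - have qq : (q <= q ^ l)%N by rewrite -{1}(expn1 q) leq_pexp2l //; lia.
    by move: H2; rewrite subzn // dvdzE.
  - rewrite eDQ; field; lra.
  - rewrite ceil_le_int ler_pdivrMr ?ltr0n // eDQ -/A hq1; nra.
  - rewrite -ltzD1 subrK.
    rewrite ceil_gt_int -/A ltr_pdivlMr // eDQ; nra.
case=> d [d0 dd ea c1 c2].
rewrite ceil_le_int ler_pdivrMr ?ltr0n // -/A in c1.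
rewrite -ltzD1 subrK in c2.
rewrite ceil_gt_int -/A ltr_pdivlMr // in c2.
rewrite -/A in ea.
have ed : d%:Q = A * q%:Q - A * alpha by rewrite ea; field; lra.
rewrite hq1 ed in c1; rewrite ed in c2.
split; nra.
Qed.
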